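(* Let $f:\mathbb{R}^n\to\mathbb{R}$ be $C^2$ smooth, $\lambda>0$, $h(x)=\lambda\|x\|_1$, $t>0$, and let $x^*$ be a root of $F_{\mathrm{PGM}}(x):=x-\mathrm{prox}_{th}(x-t\nabla f(x))$. Suppose strict complementarity holds at $x^*$, i.e. there is no index $i$ with $x^*_i=0$ and $|[\nabla f(x^* )]_i|=\lambda$. Then there exists $b>0$ such that the Jacobian of $\mathrm{prox}_{th}$ exists and is constant on the set $\{x-t\nabla f(x): x\in\bar B(x^*,b)\}$.
   Context: $\mathrm{prox}_{th}(y)=\arg\min_x\{h(x)+\frac{1}{2t}\|x-y\|^2\}$ (componentwise soft thresholding at level $t\lambda$). $\bar B(x,r)$ is the closed Euclidean ball of radius $r$ centered at $x$. *)

(* Defs.v *)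
From HB Require Import structures.
From mathcomp Require Import all_boot all_order all_algebra.
From mathcomp Require Import all_classical all_reals all_analysis.
Set Implicit Arguments. Unset Strict Implicit. Unset Printing Implicit Defensive.
Import Order.TTheory GRing.Theory Num.Theory.
Import numFieldNormedType.Exports.
Local Open Scope classical_set_scope.
Local Open Scope ring_scope.

Definition basis_vec {R : realType} {n : nat} (i : 'I_n) : 'rV[R]_n := delta_mx 0 i.

Definition partial {R : realType} {n : nat} (i : 'I_n) (f : 'rV[R]_n -> R)
  (x : 'rV[R]_n) : R := 'D_(basis_vec i) f x.

Definition C2 {R : realType} {n : nat} (f : 'rV[R]_n -> R) : Prop :=
  continuous f /\
  (forall i x, derivable f x (basis_vec i)) /\
  (forall i, continuous (partial i f)) /\
  (forall i j x, derivable (partial i f) x (basis_vec j)) /\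
  (forall i j, continuous (partial j (partial i f))).

Definition grad {R : realType} {n : nat} (f : 'rV[R]_n -> R) (x : 'rV[R]_n)
  : 'rV[R]_n := \row_i partial i f x.

(* prox_{th} for h = lam * ||.||_1 : componentwise soft thresholding at level t*lam *)
Definition soft_thr {R : realType} (k a : R) : R :=
  if k < a then a - k else if a < - k then a + k else 0.

Definition prox_l1 {R : realType} {n : nat} (t lam : R) (y : 'rV[R]_n) : 'rV[R]_n :=
  \row_i soft_thr (t * lam) (y 0 i).

Definition cball_euclid {R : realType} {n : nat} (c : 'rV[R]_n) (r : R) : set 'rV[R]_n :=
  [set x | \sum_i (x 0 i - c 0 i) ^+ 2 <= r ^+ 2].

(* Main.v *)
Require Import Defs.
From HB Require Import structures.
From mathcomp Require Import all_boot all_order all_algebra.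
From mathcomp Require Import all_classical all_reals all_analysis.
From mathcomp Require Import lra.
Import Order.TTheory GRing.Theory Num.Theory.
Import numFieldNormedType.Exports.
Local Open Scope classical_set_scope.
Local Open Scope ring_scope.

Definition sd {R : realType} (k a : R) : R :=
  if k < a then 1 else if a < - k then 1 else 0.
Definition sc {R : realType} (k a : R) : R :=
  if k < a then - k else if a < - k then k else 0.

Lemma soft_loc (R : realType) (k a z : R) : 0 < k ->
  `|a - z| < `|a - k| -> `|a - z| < `|a + k| ->
  soft_thr k z = sd k a * z + sc k a.
Proof.
move=> k0 h1 h2; move: h1 h2; rewrite /soft_thr /sd /sc.
have [ak|ak] := boolP (k < a); last (move: ak; rewrite -real_leNgt ?num_real // => ak).
  have hh1 : 0 < a - k by lra. rewrite (gtr0_norm hh1).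
  have hh2 : 0 < a + k by lra. rewrite (gtr0_norm hh2).
  rewrite ltr_norml => /andP[h1 h2] _.
  have -> : k < z by lra.
  lra.
have [ak2|ak2] := boolP (a < -k); last (move: ak2; rewrite -real_leNgt ?num_real // => ak2).
  have hh3 : a - k < 0 by lra. rewrite (ltr0_norm hh3).
  have hh4 : a + k < 0 by lra. rewrite (ltr0_norm hh4).
  move=> _; rewrite ltr_norml => /andP[h1 h2].
  have -> : (k < z) = false by apply/negbTE; rewrite -leNgt; lra.
  have -> : z < - k by lra.
  lra.
have hh5 : a - k <= 0 by lra. rewrite (ler0_norm hh5).
have hh6 : 0 <= a + k by lra. rewrite (ger0_norm hh6).
rewrite !ltr_norml => /andP[h1 h2] /andP[h3 h4].
have -> : (k < z) = false by apply/negbTE; rewrite -leNgt; lra.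
have -> : (z < - k) = false by apply/negbTE; rewrite -leNgt; lra.
lra.
Qed.

Lemma mulmx_diag_cont (R : realType) n (d : 'rV[R]_n) :
  (forall j, `|d 0 j| <= 1) -> continuous (fun u : 'rV[R]_n => u *m diag_mx d).
Proof.
move=> d1 x.
have FF : Filter (nbhs x) by apply: nbhs_filter.
apply/cvg_ballP => e e0.
move: (@near_ball _ _ x e e0); apply: filterS => z [_ hb]; split => // i j.
move: (hb i j); rewrite !mul_mx_diag !mxE -!ball_normE /= => h.
rewrite -mulrBl normrM; apply: le_lt_trans h.
by rewrite -[leRHS]mulr1 ler_wpM2l.
Qed.

Lemma diff_near_affine (R : realType) n (f : 'rV[R]_n -> 'rV[R]_n)
  (D : 'M[R]_n) (C : 'rV[R]_n) (y : 'rV[R]_n) :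
  continuous (fun u : 'rV[R]_n => u *m D) ->
  (\forall z \near y, f z = z *m D + C) ->
  differentiable f y /\ 'J f y = D.
Proof.
move=> cD fy.
have fy0 : f y = y *m D + C := nbhs_singleton fy.
have H : f \o shift y = cst (f y) + (mulmxr D : {linear _ -> _}) +o_ (0 : 'rV[R]_n) id.
  apply/eqaddoP => eps eps0.
  move: fy => /nbhs_ballP [r r0 hr].
  apply/nbhs_ballP; exists r => // h hb.
  have hb' : ball y r (h + y).
    move: hb; rewrite -!ball_normE /= => hb.
    by rewrite opprD addrCA subrr addr0 normrN; move: hb; rewrite sub0r normrN.
  have -> : (f \o shift y - (cst (f y) + mulmxr D)) h = f (h + y) - (f y + h *m D) by [].
  rewrite (hr _ hb') fy0 mulmxDl.
  have -> : h *m D + y *m D + C - (y *m D + C + h *m D) = 0.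
    by rewrite [y *m D + C + _]addrC addrA subrr.
  by rewrite normr0 mulr_ge0 // ltW.
have dD : 'd f y = mulmxr D :> (_ -> _).
  by apply: diff_unique H => x; move: (cD x).

have df : differentiable f y by apply/diff_locallyP; rewrite dD; split.
split => //.
rewrite /jacobian; apply/row_matrixP => i.
by rewrite !rowE mul_rV_lin1 dD.
Qed.

Theorem lemma3p4 (R : realType) (n : nat) (f : 'rV[R]_n -> R) (lam t : R)
  (xs : 'rV[R]_n) :
  C2 f -> 0 < lam -> 0 < t ->
  xs - prox_l1 t lam (xs - t *: grad f xs) = 0 ->
  (forall i : 'I_n, ~ (xs 0 i = 0 /\ `|grad f xs 0 i| = lam)) ->
  exists b : R, 0 < b /\
    exists J : 'M[R]_n,
      forall y, (exists2 x, cball_euclid xs b x & y = x - t *: grad f x) ->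
        differentiable (prox_l1 t lam) y /\ 'J (prox_l1 t lam) y = J.
Proof.
move=> [fc [fd [pc _]]] lam0 t0 hfix hsc.
set k := t * lam.
have k0 : 0 < k by rewrite mulr_gt0.
pose Y (x : 'rV[R]_n) := x - t *: grad f x.
pose ys := Y xs.
have YE x i : Y x 0 i = x 0 i - t * partial i f x by rewrite !mxE.
have ysE i : ys 0 i = xs 0 i - t * partial i f xs := YE xs i.
have gE i : grad f xs 0 i = partial i f xs by rewrite mxE.
have fixi i : xs 0 i = soft_thr k (ys 0 i).
  have := congr1 (fun M : 'rV[R]_n => M 0 i) hfix.
  rewrite !mxE => /eqP; rewrite subr_eq0 => /eqP e.
  by rewrite [LHS]e.
have strict i : ys 0 i != k /\ ys 0 i != - k.
  have hs := hsc i; rewrite gE in hs.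
  have fi := fixi i; rewrite /soft_thr in fi.
  have yi := ysE i.
  split; apply/eqP => he; rewrite he in fi yi.
    move: fi; rewrite ltxx (_ : (k < - k) = false); last by apply/negP => h; lra.
    move=> x0; apply: hs; split => //.
    have -> : partial i f xs = - lam.
      apply: (mulfI (lt0r_neq0 t0)); rewrite /k in yi; rewrite x0 in yi; nra.
    by rewrite normrN gtr0_norm.
  move: fi; rewrite ltxx (_ : (k < - k) = false); last by apply/negP => h; lra.
  move=> x0; apply: hs; split => //.
  have -> : partial i f xs = lam.
    apply: (mulfI (lt0r_neq0 t0)); rewrite /k in yi; rewrite x0 in yi; nra.
  by rewrite gtr0_norm.
pose m i := Num.min `|ys 0 i - k| `|ys 0 i + k|.
have m0 i : 0 < m i.
  have [s1 s2] := strict i.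
  by rewrite /m lt_min !normr_gt0 subr_eq0 s1 addr_eq0 s2.
have hY i : (fun x => Y x 0 i) @ xs --> ys 0 i.
  have -> : (fun x => Y x 0 i) = (fun x => x 0 i - t * partial i f x).
    by apply/funext => x; rewrite YE.
  rewrite ysE; apply: cvgB; [exact: nbhs_filter | by move: (@coord_continuous R 1 n 0 i xs) | ].
  apply: cvgMl_tmp; first exact: nbhs_filter.
  exact: pc.
have nearY : \forall x \near xs, forall i, ball (ys 0 i) (m i) (Y x 0 i).
  apply: (@filter_forall _ _ (fun i x => ball (ys 0 i) (m i) (Y x 0 i)) (nbhs xs) (nbhs_filter xs)).
  by move=> i; exact: cvg_ball (hY i) _ (m0 i).
move/nbhs_ballP: nearY => [e e0 He].
exists (e / 2); split; first by rewrite divr_gt0.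
exists (diag_mx (\row_i sd k (ys 0 i))).
move=> y [x hx ->].
have bx : ball xs e x.
  split => // i j; rewrite (ord1 i) -ball_normE /=.
  have h : (x 0 j - xs 0 j) ^+ 2 <= (e / 2) ^+ 2.
    apply: le_trans hx; rewrite (bigD1 j) //= lerDl sumr_ge0 // => l _.
    exact: sqr_ge0.
  move: h; set b := e / 2; set d := x 0 j - xs 0 j => h.
  have b0 : 0 < b by rewrite divr_gt0.
  have eb : e = b + b by rewrite /b -splitr.
  have dd : xs 0 j - x 0 j = - d by rewrite /d opprB.
  rewrite dd normrN eb ltr_norml; apply/andP; split; nra.
have hYx : forall i, ball (ys 0 i) (m i) (Y x 0 i) := He x bx.
apply: (@diff_near_affine _ _ _ _ (\row_i sc k (ys 0 i))).
  apply: mulmx_diag_cont => j; rewrite mxE /sd.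
  by case: ifP => _; [rewrite normr1 | case: ifP => _; rewrite ?normr1 ?normr0].
have : \forall z \near Y x, forall i, ball (ys 0 i) (m i) ((z : 'rV[R]_n) 0 i).
  apply: (@filter_forall _ _ (fun i (z : 'rV[R]_n) => ball (ys 0 i) (m i) (z 0 i)) (nbhs (Y x)) (nbhs_filter (Y x))).
  move=> i.
  have hn : nbhs (Y x 0 i) (ball (ys 0 i) (m i)).
    by apply: open_nbhs_nbhs; split; [exact: ball_open | exact: hYx].
  exact: (@coord_continuous R 1 n 0 i (Y x) _ hn).
apply: filterS => z hz.
apply/rowP => i; rewrite mul_mx_diag !mxE (mulrC (z 0 i)).
have := hz i; rewrite -ball_normE /= /m lt_min => /andP[h1 h2].
rewrite -ysE; move: (soft_loc _ _ _ _ k0 h1 h2); rewrite /k => ->//.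
Qed.
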